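(* For $n\geq1$ let $\ell_n=\sqrt[n]{n!}$ and $x_n=\log(\ell_{n+1}/\ell_n)$. Then for every integer $n\geq 468$, $$\frac{\ell_{n+2}}{\ell_{n+1}}+\frac{\ell_n}{\ell_{n+1}}=2\exp\Big(\frac{x_{n+1}-x_n}{2}\Big)\cosh\Big(\frac{x_{n+1}+x_n}{2}\Big)\leq 2\bigg(1-\frac{25}{144n^3}-\frac{1}{4n^4}+\frac{\tfrac12\log n+\tfrac{101}{288}+\tfrac12\log(2\pi)}{n^5}\bigg)<2.$$
   Context: $\log$ denotes the natural logarithm. *)

(* Defs.v *)
From Stdlib Require Import Reals Arith.
Open Scope R_scope.

Definition ell (n : nat) : R := Rpower (INR (fact n)) (/ INR n).

Definition xseq (n : nat) : R := ln (ell (S n) / ell n).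

(* Main.v *)
Require Import Defs.
From Stdlib Require Import Reals Lra Lia Arith Psatz.
From Coquelicot Require Import Coquelicot.
Open Scope R_scope.

Lemma mono (f f' : R -> R) a b : a <= b ->
  (forall c, a <= c <= b -> is_derive f c (f' c)) ->
  (forall c, a < c < b -> 0 <= f' c) -> f a <= f b.
Proof.
  intros Hab Hd Hp. destruct (Req_dec a b) as [->|Hne]; [lra|].
  destruct (MVT_cor2 f f' a b) as [c [Hc1 Hc2]]; [lra| |].
  - intros c Hc. apply is_derive_Reals. auto.
  - assert (0 <= f' c) by (apply Hp; lra). nra.
Qed.

Lemma ln1p_le3 x : 0 <= x -> ln (1+x) <= x - x^2/2 + x^3/3.
Proof.
  intros Hx.
  pose (f := fun c => c - c^2/2 + c^3/3 - ln (1+c)).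
  assert (f 0 <= f x).
  { apply (mono f (fun c => 1 - c + c^2 - /(1+c))); [lra| |].
    - intros c Hc. unfold f. auto_derive; [lra|]. field. lra.
    - intros c Hc. assert (1 - c + c^2 - /(1+c) = c^3/(1+c)) as -> by (field; lra).
      apply Rdiv_le_0_compat; [|lra]. apply pow_le; lra. }
  unfold f in H. replace (1+0) with 1 in H by ring. rewrite ln_1 in H. lra.
Qed.

Lemma ln1p_ge x : 0 <= x -> 2*x/(2+x) <= ln (1+x).
Proof.
  intros Hx.
  pose (f := fun c => ln (1+c) - 2*c/(2+c)).
  assert (f 0 <= f x).
  { apply (mono f (fun c => /(1+c) - 4/(2+c)^2)); [lra| |].
    - intros c Hc. unfold f. auto_derive; [lra|]. field. lra.
    - intros c Hc. assert (/(1+c) - 4/(2+c)^2 = c^2/((1+c)*(2+c)^2)) as -> by (field; lra).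
      apply Rdiv_le_0_compat; [apply pow2_ge_0|]. apply Rmult_lt_0_compat; [lra|]. apply pow_lt; lra. }
  unfold f in H. replace (1+0) with 1 in H by ring. rewrite ln_1 in H.
  replace (2*0/(2+0)) with 0 in H by field. lra.
Qed.

Lemma ln_le_sub1 y : 0 < y -> ln y <= y - 1.
Proof. intros Hy. pose proof (exp_ineq1_le (ln y)). rewrite exp_ln in H; lra. Qed.

Lemma ln1p_le x : -1 < x -> ln (1+x) <= x.
Proof. intros; pose proof (ln_le_sub1 (1+x)); lra. Qed.

Lemma cosh_le w : cosh w <= exp (w^2/2).
Proof.
  assert (Hpos : forall w, 0 <= w -> cosh w <= exp (w^2/2)).
  { clear w. intros w Hw.
    assert (Hk : forall c, 0 <= c -> (exp c - exp (-c))/2 <= c * cosh c).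
    { intros c Hc.
      pose (k := fun t => t * cosh t - (exp t - exp (-t))/2).
      assert (k 0 <= k c).
      { apply (mono k (fun t => t * ((exp t - exp (-t))/2))); [lra| |].
        - intros t Ht. unfold k, cosh. auto_derive; [auto|]. field.
        - intros t Ht. apply Rmult_le_pos; [lra|].
          assert (exp (-t) <= exp t) by (apply Rlt_le, exp_increasing; lra). lra. }
      unfold k, cosh in *. rewrite Ropp_0, exp_0 in H. lra. }
    pose (g := fun t => - (cosh t * exp (-(t^2/2)))).
    assert (g 0 <= g w).
    { apply (mono g (fun t => exp (-(t^2/2)) * (t * cosh t - (exp t - exp (-t))/2))); [lra| |].
      - intros t Ht. unfold g, cosh. auto_derive; [auto|]. replace (t*(t*1)*/2) with (t^2/2) by field. field.
      - intros t Ht. apply Rmult_le_pos; [left; apply exp_pos|]. specialize (Hk t). lra. }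
    unfold g, cosh in H. replace (-(0^2/2)) with 0 in H by field. rewrite exp_0 in H.
    rewrite Ropp_0, exp_0, (exp_Ropp (w^2/2)) in H. assert (HE : 0 < exp (w^2/2)) by apply exp_pos.
    unfold cosh. apply (Rmult_le_reg_r (/ exp (w^2/2))); [apply Rinv_0_lt_compat; auto|].
    rewrite Rinv_r; [|apply Rgt_not_eq; auto]. lra. }

  destruct (Rle_dec 0 w). auto.
  replace (cosh w) with (cosh (-w)) by (unfold cosh; rewrite Ropp_involutive; field).
  replace (w^2) with ((-w)^2) by ring. apply Hpos; lra.
Qed.
Definition aa (k : nat) : R := / INR k * ln (INR (fact k)).

Lemma ell_exp k : ell k = exp (aa k).
Proof. reflexivity. Qed.

Lemma xseq_eq k : xseq k = aa (S k) - aa k.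
Proof.
  unfold xseq. rewrite !ell_exp. unfold Rdiv. rewrite <- exp_Ropp, <- exp_plus, ln_exp. ring.
Qed.

Lemma sum_cosh u v : exp u + exp (-v) = 2 * exp ((u - v)/2) * cosh ((u + v)/2).
Proof.
  unfold cosh. replace (2 * exp ((u - v)/2) * ((exp ((u+v)/2) + exp (-((u+v)/2)))/2))
    with (exp ((u - v)/2) * exp ((u+v)/2) + exp ((u - v)/2) * exp (-((u+v)/2))) by field.
  rewrite <- !exp_plus. f_equal; f_equal; field.
Qed.

Lemma lnfactS k : ln (INR (fact (S k))) = ln (INR k + 1) + ln (INR (fact k)).
Proof.
  replace (fact (S k)) with (S k * fact k)%nat by reflexivity.
  rewrite mult_INR, S_INR. apply ln_mult; [pose proof (pos_INR k); lra | apply INR_fact_lt_0].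
Qed.

Lemma ln_succ k : 0 < k -> ln (k + 1) = ln k + ln (1 + / k).
Proof.
  intros Hk. rewrite <- ln_mult; [|lra|]. f_equal; field; lra.
  assert (0 < / k) by (apply Rinv_0_lt_compat; lra). lra.
Qed.

Definition DD (k : nat) : R := ln (INR (fact k)) - INR k * ln (INR k) + INR k.

Lemma DD_bounds k : (1 <= k)%nat -> 1 <= DD k <= 1 + ln (INR k) / 2.
Proof.
  induction k as [|k IH]; intros Hk; [lia|].
  destruct (Nat.eq_dec k 0) as [->|Hk0].
  { unfold DD. simpl. rewrite ln_1. lra. }
  assert (Hk1 : (1 <= k)%nat) by lia. specialize (IH Hk1).
  assert (HK : 1 <= INR k) by (apply (le_INR 1); lia).
  assert (Hstep : DD (S k) = DD k + 1 - INR k * ln (1 + / INR k)).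
  { unfold DD. rewrite lnfactS, S_INR, ln_succ by lra. ring. }
  assert (Hi : 0 < / INR k) by (apply Rinv_0_lt_compat; lra).
  pose proof (ln1p_le (/ INR k) ltac:(lra)) as Hu.
  pose proof (ln1p_ge (/ INR k) ltac:(lra)) as Hl.
  assert (E1 : INR k * (/ INR k) = 1) by (field; lra).
  assert (E2 : INR k * (2 * / INR k / (2 + / INR k)) = 2 * INR k / (2 * INR k + 1)) by (field; lra).
  assert (E3 : 2 * / INR k / (2 + / INR k) = 2 / (2 * INR k + 1)) by (field; lra).
  rewrite E3 in Hl.
  set (lam := ln (1 + / INR k)) in *.
  rewrite Hstep, S_INR, ln_succ by lra. fold lam.
  split.
  - assert (INR k * lam <= 1) by (rewrite <- E1; apply Rmult_le_compat_l; lra). lra.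
  - assert (1 <= (INR k + /2) * lam).
    { apply Rle_trans with ((INR k + /2) * (2 / (2 * INR k + 1))).
      right; field; lra. apply Rmult_le_compat_l; lra. }
    lra.
Qed.

Lemma ln2_le : ln 2 <= 5/6.
Proof. pose proof (ln1p_le3 1 ltac:(lra)). replace (1+1) with 2 in H by ring. lra. Qed.

Lemma logsq N : 468 <= N -> (2 + ln N / 2)^2 <= N / 10.
Proof.
  intros HN. set (y := sqrt N).
  assert (Hy0 : 0 <= y) by apply sqrt_pos.
  assert (Hyy : y * y = N) by (apply sqrt_sqrt; lra).
  assert (Hy1 : 1 <= y) by nra.
  assert (HlnN : ln N = 2 * ln y) by (rewrite <- Hyy, ln_mult; lra).
  assert (Hln8 : ln 8 = 3 * ln 2).
  { replace 8 with (2*(2*2)) by ring. rewrite !ln_mult; lra. }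
  assert (Hly : ln y <= ln 8 + y/8 - 1).
  { replace (ln y) with (ln 8 + ln (y/8)) by (rewrite <- ln_mult; [f_equal; field|lra|lra]).
    pose proof (ln_le_sub1 (y/8) ltac:(lra)). lra. }
  assert (Hly0 : 0 <= ln y).
  { destruct (Req_dec y 1) as [->|]; [rewrite ln_1; lra|]. left. rewrite <- ln_1. apply ln_increasing; lra. }
  pose proof ln2_le. rewrite HlnN.
  assert (H0 : 0 <= 2 + ln y <= 7/2 + y/8) by lra.
  assert (Hy21 : 21 <= y) by nra.
  replace ((2 + 2 * ln y / 2)^2) with ((2 + ln y)^2) by field.
  apply Rle_trans with ((7/2 + y/8)^2).
  - apply pow_incr; lra.
  - rewrite <- Hyy. nra.
Qed.

Lemma final_poly N : 468 <= N ->
  1/(20*N*(N+2)^2) + (-1/(2*(N+1)^2) + 1/(3*(N+1)^3))/(2*(N+1)) <= -19/(100*N^3).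
Proof.
  intros HN.
  set (t := N - 468).
  assert (Ht : 0 <= t) by (unfold t; lra).
  assert (E : -19/(100*N^3) - (1/(20*N*(N+2)^2) + (-1/(2*(N+1)^2) + 1/(3*(N+1)^3))/(2*(N+1)))
    = (54352368077600280 + 715634136844440 * t + 3922786497216 * t^2 + 11459323256 * t^3
        + 18815936 * t^4 + 16466 * t^5 + 6 * t^6) / (600*N^3*(N+1)^4*(N+2)^2)).
  { unfold t. field. repeat split; lra. }
  assert (0 <= (54352368077600280 + 715634136844440 * t + 3922786497216 * t^2 + 11459323256 * t^3
        + 18815936 * t^4 + 16466 * t^5 + 6 * t^6) / (600*N^3*(N+1)^4*(N+2)^2)).
  { apply Rdiv_le_0_compat.
    - repeat apply Rplus_le_le_0_compat; try apply Rmult_le_pos; try apply pow_le; lra.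
    - repeat apply Rmult_lt_0_compat; try apply pow_lt; lra. }
  lra.
Qed.

Lemma exp_final N : 468 <= N ->
  exp (-(19/(100*N^3))) <= 1 - (25/(144*N^3) + 1/(4*N^4)).
Proof.
  intros HN. set (h := / N).
  assert (Hh : 0 < h <= /468).
  { unfold h; split; [apply Rinv_0_lt_compat; lra|]. apply Rinv_le_contravar; lra. }
  assert (E1 : 19/(100*N^3) = 19/100*h^3) by (unfold h; field; lra).
  assert (E2 : 25/(144*N^3) + 1/(4*N^4) = 25/144*h^3 + 1/4*h^4) by (unfold h; field; lra).
  rewrite E1, E2. set (z := 19/100*h^3). set (T := 25/144*h^3 + 1/4*h^4).
  assert (Hh3 : 0 < h^3) by (apply pow_lt; lra).
  assert (Hzt : T * (1 + z) <= z).
  { assert (Ea : h^4 = h * h^3) by ring.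
    assert (Hh3b : h^3 <= /1000) by (assert (h^3 = h*h*h) by ring; nra).
    set (a := h^3) in *. unfold T, z. rewrite Ea.
    assert (HT : 0 <= 25/144*a + 1/4*(h*a) <= a/5) by nra.
    assert (Hp : (25/144*a + 1/4*(h*a)) * (19/100*a) <= a/5 * (a/5)) by nra.
    nra. }
  rewrite exp_Ropp.
  assert (Hz : 0 < z) by (unfold z; lra).
  pose proof (exp_ineq1_le z).
  apply Rle_trans with (/ (1 + z)).
  - apply Rinv_le_contravar; lra.
  - apply (Rmult_le_reg_r (1+z)); [lra|]. rewrite Rinv_l by lra. nra.
Qed.


Lemma G_bound n : (468 <= n)%nat ->
  let u := aa (S (S n)) - aa (S n) in let v := aa (S n) - aa n in
  (u - v)/2 + ((u + v)/2)^2/2 <= -(19/(100*INR n^3)).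
Proof.
  intros Hn u v.
  assert (HN : 468 <= INR n).
  { apply le_INR in Hn. rewrite INR_IZR_INZ in Hn. simpl in Hn. exact Hn. }
  pose proof (DD_bounds n ltac:(lia)) as Hq.
  unfold DD in Hq.
  unfold u, v, aa. rewrite !lnfactS, !S_INR.
  set (N := INR n) in *.
  set (L := ln (INR (fact n))) in *.
  replace (N + 1 + 1) with (N + 2) by ring.
  set (A1 := ln (N + 1)). set (A2 := ln (N + 2)).
  set (q := L - N * ln N + N) in *.
  set (lam := A1 - ln N).
  set (el := A2 - A1).
  set (P := A1 - L / N).
  set (Pst := (N+2)/(N+1) - el/2).
  assert (Hid : (/ (N + 2) * (A2 + (A1 + L)) - / (N + 1) * (A1 + L) - (/ (N + 1) * (A1 + L) - / N * L)) / 2 +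
     ((/ (N + 2) * (A2 + (A1 + L)) - / (N + 1) * (A1 + L) + (/ (N + 1) * (A1 + L) - / N * L)) / 2) ^ 2 / 2
     = (P - Pst)^2 / (2 * (N+2)^2) + (el - /(N+1)) / (2*(N+1))).
  { unfold P, Pst, el. field. lra. }
  rewrite Hid.
  assert (Hlam : lam = ln (1 + / N)) by (unfold lam, A1; rewrite ln_succ by lra; ring).
  assert (HiN : 0 < / N) by (apply Rinv_0_lt_compat; lra).
  assert (Hlam1 : lam <= / N) by (rewrite Hlam; apply ln1p_le; lra).
  assert (Hlam0 : 0 <= lam).
  { rewrite Hlam. pose proof (ln1p_ge (/N) ltac:(lra)).
    assert (0 <= 2 * / N / (2 + / N)) by (apply Rdiv_le_0_compat; lra). lra. }
  assert (Hel : el = ln (1 + / (N+1))).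
  { unfold el, A2, A1. replace (N+2) with ((N+1)+1) by ring. rewrite ln_succ by lra. ring. }
  assert (HiN1 : 0 < / (N+1)) by (apply Rinv_0_lt_compat; lra).
  assert (Hel1 : el <= / (N+1)) by (rewrite Hel; apply ln1p_le; lra).
  assert (Hel0 : 0 <= el).
  { rewrite Hel. pose proof (ln1p_ge (/(N+1)) ltac:(lra)).
    assert (0 <= 2 * / (N+1) / (2 + / (N+1))) by (apply Rdiv_le_0_compat; lra). lra. }
  assert (Hel3 : el <= /(N+1) - (/(N+1))^2/2 + (/(N+1))^3/3) by (rewrite Hel; apply ln1p_le3; lra).
  assert (HP : P - Pst = lam + 1 - q / N - (N+2)/(N+1) + el/2).
  { unfold P, Pst, lam, q. field. lra. }
  assert (Hqd : q / N = q * / N) by (unfold Rdiv; ring).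
  assert (HPup : P - Pst <= 0).
  { rewrite HP. assert (/N <= q / N) by (rewrite Hqd; nra).
    assert ((N+2)/(N+1) = 1 + /(N+1)) by (field; lra). lra. }
  assert (HPlo : - ((1 + q) / N) <= P - Pst).
  { rewrite HP. assert ((N+2)/(N+1) = 1 + /(N+1)) by (field; lra).
    assert (/(N+1) <= /N) by (apply Rinv_le_contravar; lra).
    assert ((1+q)/N = /N + q/N) by (field; lra). lra. }
  assert (Hsq : (P - Pst)^2 <= /(10*N)).
  { apply Rle_trans with (((1+q)/N)^2).
    - assert (0 <= (1+q)/N) by (apply Rdiv_le_0_compat; lra). nra.
    - pose proof (logsq N HN).
      assert (0 <= 1 + q <= 2 + ln N / 2) by lra.
      assert ((1+q)^2 <= N/10) by (apply Rle_trans with ((2 + ln N/2)^2); [apply pow_incr; lra| lra]).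
      replace (((1+q)/N)^2) with ((1+q)^2 / N^2) by (field; lra).
      replace (/(10*N)) with ((N/10)/N^2) by (field; lra).
      unfold Rdiv. apply Rmult_le_compat_r; [|lra]. left; apply Rinv_0_lt_compat, pow_lt; lra. }
  pose proof (final_poly N HN) as Hf.
  apply Rle_trans with (/(10*N) / (2*(N+2)^2) + (/(N+1) - (/(N+1))^2/2 + (/(N+1))^3/3 - /(N+1)) / (2*(N+1))).
  - apply Rplus_le_compat.
    + unfold Rdiv. apply Rmult_le_compat_r; [|lra]. left; apply Rinv_0_lt_compat.
      assert (0 < (N+2)^2) by (apply pow_lt; lra). lra.
    + unfold Rdiv. apply Rmult_le_compat_r; [left; apply Rinv_0_lt_compat; lra|lra].
  - replace (/(10*N) / (2*(N+2)^2) + (/(N+1) - (/(N+1))^2/2 + (/(N+1))^3/3 - /(N+1)) / (2*(N+1)))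
      with (1/(20*N*(N+2)^2) + (-1/(2*(N+1)^2) + 1/(3*(N+1)^3))/(2*(N+1))) by (field; lra).
    lra.
Qed.

Theorem mainTheorem10 : forall n : nat, (468 <= n)%nat ->
  let N := INR n in
  ell (n + 2) / ell (n + 1) + ell n / ell (n + 1)
    = 2 * exp ((xseq (n + 1) - xseq n) / 2) * cosh ((xseq (n + 1) + xseq n) / 2)
  /\
  2 * exp ((xseq (n + 1) - xseq n) / 2) * cosh ((xseq (n + 1) + xseq n) / 2)
    <= 2 * (1 - 25 / (144 * N ^ 3) - 1 / (4 * N ^ 4)
             + (/ 2 * ln N + 101 / 288 + / 2 * ln (2 * PI)) / N ^ 5)
  /\
  2 * (1 - 25 / (144 * N ^ 3) - 1 / (4 * N ^ 4)
             + (/ 2 * ln N + 101 / 288 + / 2 * ln (2 * PI)) / N ^ 5) < 2.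
Proof.
  intros n Hn N.
  assert (HN : 468 <= N).
  { unfold N. apply le_INR in Hn. rewrite INR_IZR_INZ in Hn. simpl in Hn. exact Hn. }
  replace (n+2)%nat with (S (S n)) by lia. replace (n+1)%nat with (S n) by lia.
  rewrite !xseq_eq.
  set (u := aa (S (S n)) - aa (S n)). set (v := aa (S n) - aa n).
  assert (Heq : ell (S (S n)) / ell (S n) + ell n / ell (S n) = exp u + exp (- v)).
  { rewrite !ell_exp. unfold u, v, Rdiv. rewrite <- !exp_Ropp, <- !exp_plus. f_equal; f_equal; ring. }
  rewrite Heq, sum_cosh.
  assert (HlnN : 0 <= ln N) by (rewrite <- ln_1; left; apply ln_increasing; lra).
  pose proof PI_RGT_0 as Hpi0. pose proof PI_4 as Hpi4. pose proof PI2_1 as Hpi1.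
  assert (Hln2pi : 0 <= ln (2 * PI)) by (rewrite <- ln_1; left; apply ln_increasing; lra).
  assert (Hln2pi' : ln (2 * PI) <= 7) by (pose proof (ln_le_sub1 (2*PI)); lra).
  assert (HlnN' : ln N <= N) by (pose proof (ln_le_sub1 N); lra).
  assert (HN5 : 0 < N^5) by (apply pow_lt; lra).
  set (P5 := (/ 2 * ln N + 101 / 288 + / 2 * ln (2 * PI)) / N ^ 5).
  assert (HP5 : 0 <= P5) by (unfold P5; apply Rdiv_le_0_compat; lra).
  assert (HP5' : P5 < 25 / (144 * N ^ 3) + 1 / (4 * N ^ 4)).
  { apply Rle_lt_trans with ((N/2 + 4)/N^5).
    - unfold P5. unfold Rdiv. apply Rmult_le_compat_r; [left; apply Rinv_0_lt_compat; lra|lra].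
    - assert (E : 25 / (144 * N ^ 3) + 1 / (4 * N ^ 4) - (N/2+4)/N^5
                  = (25/144 * N^2 + N/4 - N/2 - 4)/N^5) by (field; lra).
      assert (0 < (25/144 * N^2 + N/4 - N/2 - 4)/N^5).
      { apply Rdiv_lt_0_compat; [nra|lra]. }
      lra. }
  assert (Hmain : 2 * exp ((u - v) / 2) * cosh ((u + v) / 2)
                   <= 2 * (1 - (25 / (144 * N ^ 3) + 1 / (4 * N ^ 4)))).
  { pose proof (G_bound n Hn) as HG. cbv zeta in HG. fold u v in HG. fold N in HG.
    pose proof (cosh_le ((u + v) / 2)) as Hc.
    assert (Hd : 0 < exp ((u - v) / 2)) by apply exp_pos.
    assert (H1 : exp ((u - v) / 2) * cosh ((u + v) / 2) <= exp ((u - v) / 2 + ((u + v) / 2)^2/2)).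
    { rewrite exp_plus. apply Rmult_le_compat_l; lra. }
    assert (H2 : exp ((u - v) / 2 + ((u + v) / 2)^2/2) <= exp (-(19/(100*N^3)))).
    { destruct (Rle_lt_or_eq_dec _ _ HG) as [Hlt|Heq']; [left; apply exp_increasing; exact Hlt|rewrite Heq'; lra]. }
    pose proof (exp_final N HN). lra. }
  split; [reflexivity|]. split; lra.
Qed.
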